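(* There exist a subgroup $F$ of $\mathrm{SL}_3(\mathbb{Z})$ which is free on two generators, a linear form $f: \mathbb{Q}^3 \to \mathbb{Q}$ with rational coefficients, and a vector $u \in \mathbb{Q}^3$, such that for all $g \in F$: (1) $f(gu) \ge 0$, and (2) $f(gu) = 0$ if and only if $g = 1$. *)

(* Defs.v *)
From HB Require Import structures.
From mathcomp Require Import all_boot all_order all_algebra.
Set Implicit Arguments. Unset Strict Implicit. Unset Printing Implicit Defensive.
Import Order.TTheory GRing.Theory Num.Theory.
Local Open Scope ring_scope.

(* Words in two generators and their inverses: a letter is (index of the
   generator in 'I_2, inverted?). *)
Definition letter := ('I_2 * bool)%type.

Definition cancels (a b : letter) : bool := (a.1 == b.1) && (a.2 != b.2).

Definition reduced (w : seq letter) : bool := sorted (fun a b => ~~ cancels a b) w.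

Definition letter_mx (A : 'I_2 -> 'M[int]_3) (l : letter) : 'M[int]_3 :=
  if l.2 then invmx (A l.1) else A l.1.

Definition eval_word (A : 'I_2 -> 'M[int]_3) (w : seq letter) : 'M[int]_3 :=
  foldr (fun l M => letter_mx A l *m M) 1%:M w.

Definition in_SL3Z (M : 'M[int]_3) : Prop := \det M = 1.

Definition free_on_two (A : 'I_2 -> 'M[int]_3) : Prop :=
  forall w : seq letter, reduced w -> w != [::] -> eval_word A w != 1%:M.

Definition in_gen (A : 'I_2 -> 'M[int]_3) (g : 'M[int]_3) : Prop :=
  exists w : seq letter, g = eval_word A w.

Definition form_at (f : 'rV[rat]_3) (g : 'M[int]_3) (u : 'cV[rat]_3) : rat :=
  (f *m (map_mx (fun z : int => z%:~R : rat) g) *m u) 0 0.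

(* Main.v *)
Require Import Defs.
From mathcomp Require Import all_boot all_order all_algebra zify.
Import Order.TTheory GRing.Theory Num.Theory.
Local Open Scope ring_scope.

Definition mk3 (a b c d e f g h k : int) : 'M[int]_3 :=
  \matrix_(i < 3, j < 3) nth 0 (nth [::] [:: [:: a; b; c]; [:: d; e; f]; [:: g; h; k]] i) j.
Definition col3 (p q r : int) : 'cV[int]_3 := \col_(i < 3) nth 0 [:: p; q; r] i.

Lemma mul_mk3_col3 a b c d e f g h k p q r :
  mk3 a b c d e f g h k  *m col3 p q r =
  col3 (a * p + b * q + c * r) (d * p + e * q + f * r) (g * p + h * q + k * r).
Proof.
apply/matrixP => i j; rewrite !mxE !big_ord_recr big_ord0 /= !mxE /=.
by case: i => [[|[|[|i]]] Hi] //=; rewrite add0r.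
Qed.

Lemma col3E (V : 'cV[int]_3) : exists p q r, V = col3 p q r.
Proof.
exists (V (inord 0) 0), (V (inord 1) 0), (V (inord 2) 0).
apply/matrixP => i j; rewrite !mxE (ord1 j).
by case: i => [[|[|[|i]]] Hi] //=; congr (V _ _); apply/val_inj; rewrite /= inordK.
Qed.

Lemma mul_mk3 a b c d e f g h k a' b' c' d' e' f' g' h' k' :
  mk3 a b c d e f g h k  *m mk3 a' b' c' d' e' f' g' h' k' =
  mk3 (a * a' + b * d' + c * g') (a * b' + b * e' + c * h') (a * c' + b * f' + c * k')
      (d * a' + e * d' + f * g') (d * b' + e * e' + f * h') (d * c' + e * f' + f * k')
      (g * a' + h * d' + k * g') (g * b' + h * e' + k * h') (g * c' + h * f' + k * k').
Proof.
apply/matrixP => i j; rewrite !mxE !big_ord_recr big_ord0 /= !mxE /= add0r.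
by case: i => [[|[|[|i]]] Hi] //=; case: j => [[|[|[|j]]] Hj].
Qed.

Lemma mk3_1 : mk3 1 0 0 0 1 0 0 0 1 = 1%:M.
Proof.
apply/matrixP => i j; rewrite !mxE.
by case: i => [[|[|[|i]]] Hi] //=; case: j => [[|[|[|j]]] Hj].
Qed.

Definition A0 := mk3 1 6 9 0 1 3 0 0 1.
Definition A0i := mk3 1 (-6) 9 0 1 (-3) 0 0 1.
Definition A1 := mk3 1 0 0 3 1 0 9 6 1.
Definition A1i := mk3 1 0 0 (-3) 1 0 9 (-6) 1.
Definition A (i : 'I_2) : 'M[int]_3 := if val i == 0%N then A0 else A1.

Lemma A0A0i : A0  *m A0i = 1%:M. Proof. by rewrite mul_mk3 -mk3_1. Qed.
Lemma A1A1i : A1  *m A1i = 1%:M. Proof. by rewrite mul_mk3 -mk3_1. Qed.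

Lemma inv_of (M N : 'M[int]_3) : M  *m N = 1%:M -> invmx M = N.
Proof.
move=> MN; have [uM _] := mulmx1_unit MN.
by rewrite -[N]mul1mx -(mulVmx uM) -mulmxA MN mulmx1.
Qed.

Lemma det_lower a d e g h k : \det (mk3 a 0 0 d e 0 g h k) = a * e * k.
Proof.
rewrite det_trig; last first.
  apply/is_trig_mxP => i j; rewrite !mxE.
  by case: i => [[|[|[|i]]] Hi] //=; case: j => [[|[|[|j]]] Hj].
by rewrite !big_ord_recr big_ord0 /= !mxE /= mul1r.
Qed.

Lemma detA i : \det (A i) = 1.
Proof.
rewrite /A; case: ifP => _; last by rewrite det_lower.
have -> : A0 = (mk3 1 0 0 6 1 0 9 3 1)^T.
  apply/matrixP => i' j; rewrite !mxE.
  by case: i' => [[|[|[|i']]] Hi] //=; case: j => [[|[|[|j]]] Hj].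
by rewrite det_tr det_lower.
Qed.

Definition invp (p q r : int) : Prop := q * q = p * r /\ 0 <= p /\ 0 <= r.
Definition region (l : letter) (p q r : int) : Prop :=
  (if val l.1 == 0%N then r < p else p < r) /\ (if l.2 then q < 0 else 0 < q).

Lemma letterE (l : letter) : letter_mx A l =
  if val l.1 == 0%N then (if l.2 then A0i else A0) else (if l.2 then A1i else A1).
Proof.
case: l => [[[|[|i]] Hi] [|]] //=; rewrite /letter_mx /A /=;
  by [apply: inv_of; rewrite ?A0A0i ?A1A1i].
Qed.

Lemma sq_lt (p q r : int) : q * q = p * r -> 0 <= p -> p < r -> q < r /\ - q < r.
Proof. move=> *; split; nia. Qed.

Lemma step l p q r : invp p q r ->
  ((p == 1) && (q == 1) && (r == 1) \/ exists l', region l' p q r /\ ~~ cancels l l') ->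
  exists p' q' r', letter_mx A l *m col3 p q r = col3 p' q' r' /\ invp p' q' r' /\ region l p' q' r'.
Proof.
move=> [H0 [Hp Hr]] Hd.
have H0' : q * q = r * p by rewrite H0 mulrC.
rewrite letterE /A0i /A0 /A1i /A1.
case: l Hd => [[[|[|i]] Hi] [|]] //= Hd; rewrite mul_mk3_col3; do 3 eexists; split; try reflexivity;
  rewrite /invp /region /=;
  (case: Hd => [/andP[/andP[/eqP-> /eqP->] /eqP->]|[[[[|[|j]] Hj] [|]] [/= [Hr1 Hq1] Hc]]] //;
   [ idtac | .. ]).
all: try (simpl in Hr1, Hq1).
all: rewrite ?mul1r ?mul0r ?add0r ?addr0 ?mulr1.
all: try (have [Hx Hy] := sq_lt H0 Hp Hr1); try (have [Hx Hy] := sq_lt H0' Hr Hr1).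
all: split; [split; [nia | split; nia] | split; nia].
Qed.

Definition u3 := col3 1 1 1.

Lemma orbit w : reduced w -> exists p q r,
  eval_word A w *m u3 = col3 p q r /\ invp p q r /\
  (if w is l :: _ then region l p q r else (p == 1) && (q == 1) && (r == 1)).
Proof.
elim: w => [|l w IH] /=.
  by move=> _; exists 1, 1, 1; rewrite mul1mx /invp.
move=> Hred.
have Hw : reduced w by move: Hred; rewrite /reduced; case: w {IH} => //= l' w' /andP[].
have [p [q [r [E [Hi Hreg]]]]] := IH Hw.
have Hd : (p == 1) && (q == 1) && (r == 1) \/ exists l', region l' p q r /\ ~~ cancels l l'.
  case: w Hred Hw IH E Hreg => [|l' w'] Hred _ _ _ Hreg; first by left.
  by right; exists l'; split => //; move: Hred; rewrite /reduced /= => /andP[].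
have [p' [q' [r' [E' [Hi' Hreg']]]]] := @step l p q r Hi Hd.
by exists p', q', r'; rewrite -mulmxA E E'.
Qed.

Definition push (l : letter) (w : seq letter) :=
  if w is l' :: w' then (if cancels l l' then w' else l :: l' :: w') else [:: l].

Lemma cancel_mx l l' : cancels l l' -> letter_mx A l *m letter_mx A l' = 1%:M.
Proof.
case: l l' => [i s] [i' s'] /andP[/= /eqP<-].
have U : A i \in unitmx by rewrite unitmxE detA unitr1.
by case: s; case: s' => //= _; rewrite /letter_mx /= ?mulVmx ?mulmxV.
Qed.

Lemma push_ok l w : reduced w -> reduced (push l w) /\ eval_word A (push l w) = letter_mx A l *m eval_word A w.
Proof.
case: w => [|l' w] //= Hr.
case: ifP => Hc.
  split; first by move: Hr; rewrite /reduced /=; apply: path_sorted.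
  by rewrite mulmxA cancel_mx // mul1mx.
by split => //; rewrite /reduced /= Hc.
Qed.

Lemma reduce_ok w : exists w', reduced w' /\ eval_word A w' = eval_word A w.
Proof.
elim: w => [|l w [w' [Hr E]]]; first by exists [::].
have [Hr' E'] := @push_ok l w' Hr.
by exists (push l w'); rewrite E' E.
Qed.

Definition rint := fun z : int => z%:~R : rat.
Definition f3 : 'rV[int]_3 := \row_(j < 3) nth 0 [:: 1; -2; 1] j.

Lemma f3_col3 p q r : (f3 *m col3 p q r) 0 0 = p - 2 * q + r.
Proof.
rewrite !mxE !big_ord_recr big_ord0 /= !mxE /=; lia.
Qed.

Lemma formE g : form_at (map_mx rint f3) g (map_mx rint u3) = rint ((f3 *m (g *m u3)) 0 0).
Proof.
rewrite /form_at -mulmxA /rint -!map_mxM.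
by rewrite mxE.
Qed.

Theorem theorem7 :
  exists A : 'I_2 -> 'M[int]_3,
    (forall i, in_SL3Z (A i)) /\ free_on_two A /\
    exists (f : 'rV[rat]_3) (u : 'cV[rat]_3),
      forall g : 'M[int]_3, in_gen A g ->
        0 <= form_at f g u /\ (form_at f g u = 0 <-> g = 1%:M).
Proof.
have pos w : reduced w -> w != [::] -> 0 < (f3 *m (eval_word A w *m u3)) 0 0.
  move=> Hr Hne; have [p [q [r [E [[H0 [Hp Hr']] Hreg]]]]] := @orbit w Hr.
  rewrite E f3_col3.
  case: w Hr Hne E Hreg => // l w _ _ _ [Hreg _].
  by case: ifP Hreg => _ Hreg; nia.
have f1 : (f3 *m (1%:M *m u3)) 0 0 = 0 by rewrite mul1mx f3_col3.
exists A; split; first by move=> i; rewrite /in_SL3Z detA.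
split.
  move=> w Hr Hne; apply/eqP => E.
  by have := pos w Hr Hne; rewrite E f1 ltxx.
exists (map_mx rint f3), (map_mx rint u3) => g [w ->].
have [w' [Hr <-]] := reduce_ok w.
rewrite formE.
case: w' Hr => [|l w'] Hr.
  by rewrite /= f1 /rint; split => //.
have P := pos _ Hr isT.
split; first by rewrite /rint ler0z ltW.
split.
  by move=> /eqP; rewrite /rint intr_eq0 => /eqP H; rewrite H ltxx in P.
by move=> E; rewrite E f1 in P; rewrite ltxx in P.
Qed.
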